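(* Let $0<c<\Gamma_0$ and $t>0$, and let $\mathcal D=\{(\tau,p):0<\tau<t,\ c<p<\Gamma_0\}$. Let $A$ be the cooperation area, regions V and VI, and $w_0,w_1,w_2,A_s,A_c$ be as defined in the context. - If the restriction of $A$ to region V attains its maximum at a point $(\tau^\star,p^\star)$ of region V, then $$A_c(\tau^\star,p^\star;w_1,1)-A_s(\tau^\star,p^\star;w_0,w_1)=1-2w_1+w_0.$$ - If the restriction of $A$ to region VI attains its maximum at a point $(\tau^\star,p^\star)$ of region VI, then $$A_s(\tau^\star,p^\star;w_2,1)-A_c(\tau^\star,p^\star;w_0,w_2)=1-2w_2+w_0.$$ In both cases $w_0,w_1,w_2$ are evaluated at $(\tau^\star,p^\star)$.
   Context: The client utility is linear: $\Gamma(d)=\Gamma_0(1-d)$. For $(\tau,p)\in\mathcal D$ write $s=\tau/t$ and, for $w\in(0,1]$, set $K(w)=1-(1-w)s$. Define $$d_s(w;\tau,p)=1-\frac{cK(w)}{wp},\qquad d_c(w;\tau,p)=1-\frac{p}{\Gamma_0K(w)}.$$ The cooperation area is $$A(\tau,p)=\int_0^1\max\{\min(d_s,d_c),0\}\,dw.$$ For $0\le x\le y\le1$, let $$A_s(\tau,p;x,y)=\int_x^y d_s(w;\tau,p)\,dw,\qquad A_c(\tau,p;x,y)=\int_x^y d_c(w;\tau,p)\,dw.$$ Define the thresholds $$w_0=\max\left\{\frac{c(t-\tau)}{pt-c\tau},\ \frac{pt-\Gamma_0(t-\tau)}{\Gamma_0\tau}\right\},$$ $$w_1=\left(\frac{p-\sqrt{p^2-4c\Gamma_0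 s(1-s)}}{2s\sqrt{c\Gamma_0}}\right)^2,\qquad w_2=\left(\frac{p+\sqrt{p^2-4c\Gamma_0 s(1-s)}}{2s\sqrt{c\Gamma_0}}\right)^2.$$ The regions (subsets of $\mathcal D$) are: - region V: $p^2\ge 4c\Gamma_0 s(1-s)$, $p<\Gamma_0(1-s)+cs$, and $p>\sqrt{c\Gamma_0}$; - region VI: $p^2\ge4c\Gamma_0 s(1-s)$, $p>\Gamma_0(1-s)+cs$, and $p<\sqrt{c\Gamma_0}$. *)

(* Defs.v *)
From Stdlib Require Import Reals.
From Coquelicot Require Import Coquelicot.
Open Scope R_scope.

Definition sr (t tau : R) : R := tau / t.

Definition Kf (t tau w : R) : R := 1 - (1 - w) * sr t tau.

Definition d_s (c t tau p w : R) : R := 1 - c * Kf t tau w / (w * p).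

Definition d_c (G0 t tau p w : R) : R := 1 - p / (G0 * Kf t tau w).

Definition coopA (c G0 t tau p : R) : R :=
  RInt (fun w => Rmax (Rmin (d_s c t tau p w) (d_c G0 t tau p w)) 0) 0 1.

Definition A_s (c t tau p x y : R) : R := RInt (fun w => d_s c t tau p w) x y.
Definition A_c (G0 t tau p x y : R) : R := RInt (fun w => d_c G0 t tau p w) x y.

Definition w0 (c G0 t tau p : R) : R :=
  Rmax (c * (t - tau) / (p * t - c * tau)) ((p * t - G0 * (t - tau)) / (G0 * tau)).

Definition disc (c G0 t tau p : R) : R :=
  p ^ 2 - 4 * c * G0 * sr t tau * (1 - sr t tau).

Definition w1 (c G0 t tau p : R) : R :=
  ((p - sqrt (disc c G0 t tau p)) / (2 * sr t tau * sqrt (c * G0))) ^ 2.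

Definition w2 (c G0 t tau p : R) : R :=
  ((p + sqrt (disc c G0 t tau p)) / (2 * sr t tau * sqrt (c * G0))) ^ 2.

Definition inD (c G0 t tau p : R) : Prop := 0 < tau < t /\ c < p < G0.

Definition regionV (c G0 t tau p : R) : Prop :=
  inD c G0 t tau p /\
  p ^ 2 >= 4 * c * G0 * sr t tau * (1 - sr t tau) /\
  p < G0 * (1 - sr t tau) + c * sr t tau /\
  p > sqrt (c * G0).

Definition regionVI (c G0 t tau p : R) : Prop :=
  inD c G0 t tau p /\
  p ^ 2 >= 4 * c * G0 * sr t tau * (1 - sr t tau) /\
  p > G0 * (1 - sr t tau) + c * sr t tau /\
  p < sqrt (c * G0).

(* Main.v *)
Require Import Defs.
From Stdlib Require Import Reals Lra Psatz.
From Coquelicot Require Import Coquelicot.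
Open Scope R_scope.

Definition Sf (c s q w : R) : R := w - c / q * ((1 - s) * ln w + s * w).
Definition Cf (G s q w : R) : R := w - q / (G * s) * ln (1 - (1 - w) * s).

Lemma is_RInt_ds (c t tau p x y : R) :
  0 < x -> x <= y -> 0 < p ->
  is_RInt (d_s c t tau p) x y (Sf c (sr t tau) p y - Sf c (sr t tau) p x).
Proof.
  intros Hx Hxy Hp.
  assert (E : forall u v : R, minus u v = u - v) by reflexivity.
  rewrite <- E.
  apply (is_RInt_derive (Sf c (sr t tau) p)).
  - intros w Hw. rewrite Rmin_left in Hw by lra.
    unfold Sf. auto_derive.
    + repeat split; lra.
    + unfold d_s, Kf. field. lra.
  - intros w Hw. rewrite Rmin_left in Hw by lra.
    apply (@ex_derive_continuous R_AbsRing R_NormedModule). unfold d_s, Kf. auto_derive.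
    apply Rmult_integral_contrapositive; lra.
Qed.

Lemma is_RInt_dc (G0 t tau p x y : R) :
  0 < x -> x <= y -> 0 < G0 -> 0 < sr t tau < 1 ->
  is_RInt (d_c G0 t tau p) x y (Cf G0 (sr t tau) p y - Cf G0 (sr t tau) p x).
Proof.
  intros Hx Hxy HG Hs.
  assert (E : forall u v : R, minus u v = u - v) by reflexivity.
  rewrite <- E.
  apply (is_RInt_derive (Cf G0 (sr t tau) p)).
  - intros w Hw. rewrite Rmin_left in Hw by lra.
    assert (0 < 1 - (1 - w) * sr t tau) by nra.
    unfold Cf. auto_derive.
    + repeat split; lra.
    + unfold d_c, Kf. field. repeat split; lra.
  - intros w Hw. rewrite Rmin_left in Hw by lra.
    assert (0 < 1 - (1 - w) * sr t tau) by nra.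
    apply (@ex_derive_continuous R_AbsRing R_NormedModule). unfold d_c, Kf. auto_derive.
    apply Rmult_integral_contrapositive; lra.
Qed.
Lemma hfact (c G s q R m w : R) : m * m = c * G -> R * R = q ^ 2 - 4 * c * G * s * (1 - s) ->
  s <> 0 -> m <> 0 -> c <> 0 -> G <> 0 ->
  q ^ 2 * w - c * G * (1 - (1 - w) * s) ^ 2 =
  - c * G * s ^ 2 * (w - ((q - R) / (2 * s * m)) ^ 2) * (w - ((q + R) / (2 * s * m)) ^ 2).
Proof.
  intros Hm HR Hs Hm0 Hc HG.
  set (u := (q - R) / (2 * s * m)). set (v := (q + R) / (2 * s * m)).
  assert (Hsum : u ^ 2 + v ^ 2 = (q ^ 2 + R * R) / (2 * s ^ 2 * (m * m))) by (unfold u, v; field; auto).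
  assert (Hprod : u ^ 2 * v ^ 2 = ((q ^ 2 - R * R) / (4 * s ^ 2 * (m * m))) ^ 2) by (unfold u, v; field; auto).
  rewrite HR, Hm in Hsum, Hprod.
  replace (- c * G * s ^ 2 * (w - u ^ 2) * (w - v ^ 2)) with
    (- c * G * s ^ 2 * (w ^ 2 - w * (u ^ 2 + v ^ 2) + u ^ 2 * v ^ 2)) by ring.
  rewrite Hsum, Hprod. field. auto.
Qed.

Lemma split3 (f g1 g2 : R -> R) (x y : R) : 0 < x -> x < y -> y < 1 ->
  (forall w, 0 < w < x -> f w = 0) -> (forall w, x < w < y -> f w = g1 w) ->
  (forall w, y < w < 1 -> f w = g2 w) -> ex_RInt g1 x y -> ex_RInt g2 y 1 ->
  RInt f 0 1 = RInt g1 x y + RInt g2 y 1.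
Proof.
  intros Hx Hxy Hy H0 H1 H2 E1 E2.
  assert (F0 : forall z, Rmin 0 x < z < Rmax 0 x -> (fun _ => 0) z = f z).
  { intros z Hz. rewrite Rmin_left, Rmax_right in Hz by lra. symmetry; apply H0; lra. }
  assert (F1 : forall z, Rmin x y < z < Rmax x y -> g1 z = f z).
  { intros z Hz. rewrite Rmin_left, Rmax_right in Hz by lra. symmetry; apply H1; lra. }
  assert (F2 : forall z, Rmin y 1 < z < Rmax y 1 -> g2 z = f z).
  { intros z Hz. rewrite Rmin_left, Rmax_right in Hz by lra. symmetry; apply H2; lra. }
  assert (X0 : ex_RInt f 0 x) by (eapply ex_RInt_ext; [exact F0| apply ex_RInt_const]).
  assert (X1 : ex_RInt f x y) by (eapply ex_RInt_ext; [exact F1| exact E1]).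
  assert (X2 : ex_RInt f y 1) by (eapply ex_RInt_ext; [exact F2| exact E2]).
  rewrite <- (RInt_Chasles f 0 y 1); [| eapply ex_RInt_Chasles; eauto | auto].
  rewrite <- (RInt_Chasles f 0 x y); auto.
  rewrite <- (RInt_ext _ _ _ _ F0), <- (RInt_ext _ _ _ _ F1), <- (RInt_ext _ _ _ _ F2).
  rewrite RInt_const. unfold plus, scal; simpl. unfold mult; simpl. ring.
Qed.

Lemma ds_form (c t tau q w : R) : 0 < t -> w <> 0 -> q <> 0 -> q * t - c * tau <> 0 ->
  d_s c t tau q w = (q - c * sr t tau) * (w - c * (t - tau) / (q * t - c * tau)) / (w * q).
Proof. intros. unfold d_s, Kf, sr. field. repeat split; auto; lra. Qed.

Lemma dc_form (G0 t tau q w : R) : 0 < t -> 0 < tau -> 0 < G0 -> Kf t tau w <> 0 ->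
  d_c G0 t tau q w = G0 * sr t tau * (w - (q * t - G0 * (t - tau)) / (G0 * tau)) / (G0 * Kf t tau w).
Proof. intros. unfold d_c. unfold Kf in *. unfold sr in *. field. repeat split; try lra. intro Hc; apply H2. replace (1 - (1-w)*(tau/t)) with ((t - (1-w)*tau)/t) by (field; lra). rewrite Hc; field; lra. Qed.

Lemma diff_form (c G0 t tau q w : R) : 0 < G0 -> Kf t tau w <> 0 -> w <> 0 -> q <> 0 ->
  d_s c t tau q w - d_c G0 t tau q w =
  (q ^ 2 * w - c * G0 * (1 - (1 - w) * sr t tau) ^ 2) / (G0 * Kf t tau w * w * q).
Proof. intros. unfold d_s, d_c. unfold Kf in *. field. repeat split; auto; lra. Qed.

Lemma Kpos (t tau w : R) : 0 < sr t tau < 1 -> 0 < w -> 0 < Kf t tau w.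
Proof. intros. unfold Kf. nra. Qed.

Lemma s_bounds (t tau : R) : 0 < t -> 0 < tau < t -> 0 < sr t tau < 1.
Proof.
  intros. unfold sr. split. apply Rdiv_lt_0_compat; lra.
  apply (Rmult_lt_reg_r t); [lra|]. replace (tau / t * t) with tau by (field; lra). lra.
Qed.

Lemma div_neg (x y : R) : x < 0 -> 0 < y -> x / y < 0.
Proof. intros. unfold Rdiv. assert (0 < / y) by (apply Rinv_0_lt_compat; lra). nra. Qed.
Lemma div_pos (x y : R) : 0 < x -> 0 < y -> 0 < x / y.
Proof. intros. apply Rdiv_lt_0_compat; lra. Qed.

Lemma V_struct (c G0 t tau q : R) : 0 < c -> c < G0 -> 0 < t -> regionV c G0 t tau q ->
  let s := sr t tau in
  let a := c * (t - tau) / (q * t - c * tau) in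
  let W1 := w1 c G0 t tau q in
  w0 c G0 t tau q = a /\ 0 < a /\ a < W1 /\ W1 < 1 /\
  a * (q - c * s) = c * (1 - s) /\ q ^ 2 * W1 = c * G0 * (1 - (1 - W1) * s) ^ 2 /\
  0 < Defs.disc c G0 t tau q /\ 0 < q * t - c * tau /\
  A_s c t tau q a W1 = Sf c s q W1 - Sf c s q a /\
  A_c G0 t tau q W1 1 = Cf G0 s q 1 - Cf G0 s q W1 /\
  coopA c G0 t tau q = A_s c t tau q a W1 + A_c G0 t tau q W1 1.
Proof.
  intros Hc HcG Ht [[Htau Hq] [Hdisc [HV1 HV2]]] s a W1.
  pose proof (s_bounds t tau Ht Htau) as Hs. fold s in Hs, HV1, Hdisc.
  set (m := sqrt (c * G0)) in HV2.
  assert (Hm : m * m = c * G0) by (apply sqrt_sqrt; nra).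
  assert (Hm0 : 0 < m) by (apply sqrt_lt_R0; nra).
  assert (Hqm : m * m < q * q) by nra.
  assert (H4 : 4 * s * (1 - s) <= 1) by (pose proof (pow2_ge_0 (2 * s - 1)); nra).
  set (D := Defs.disc c G0 t tau q).
  assert (HD : D = q ^ 2 - 4 * c * G0 * s * (1 - s)) by reflexivity.
  assert (HDpos : 0 < D) by (rewrite HD; nra).
  set (Rt := sqrt D).
  assert (HR : Rt * Rt = q ^ 2 - 4 * c * G0 * s * (1 - s)) by (unfold Rt; rewrite sqrt_sqrt; lra).
  assert (HR0 : 0 <= Rt) by apply sqrt_pos.
  assert (HcG0 : 0 < c * G0) by nra. assert (HcGs1 : 0 < c * G0 * s * (1 - s)) by (apply Rmult_lt_0_compat; [apply Rmult_lt_0_compat|]; lra).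
  assert (HRq : Rt < q) by nra.
  set (W2 := ((q + Rt) / (2 * s * m)) ^ 2).
  assert (EW1 : W1 = ((q - Rt) / (2 * s * m)) ^ 2) by reflexivity.
  assert (Hsm : 0 < 2 * s * m) by nra.
  assert (HW12 : W1 <= W2).
  { rewrite EW1. unfold W2. apply pow_incr. split.
    - apply Rlt_le, div_pos; lra.
    - unfold Rdiv. apply Rmult_le_compat_r; [apply Rlt_le, Rinv_0_lt_compat; lra | lra]. }
  assert (Hh : forall w, q ^ 2 * w - c * G0 * (1 - (1 - w) * s) ^ 2 = - c * G0 * s ^ 2 * (w - W1) * (w - W2)).
  { intro w. rewrite EW1. unfold W2. apply hfact; auto; lra. }
  assert (HcGs : 0 < c * G0 * s ^ 2) by (apply Rmult_lt_0_compat; [nra | nra]).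
  assert (P1 : (1 - W1) * (1 - W2) < 0).
  { pose proof (Hh 1) as H1. replace (1 - (1 - 1) * s) with 1 in H1 by ring.
    assert (0 < - c * G0 * s ^ 2 * (1 - W1) * (1 - W2)) by nra. nra. }
  assert (HW1 : W1 < 1 < W2).
  { destruct (Rlt_or_le W1 1); destruct (Rlt_or_le 1 W2); split; nra. }
  assert (Hqt : 0 < q * t - c * tau) by nra.
  assert (Ea : a * (q - c * s) = c * (1 - s)) by (unfold a, s, sr; field; lra).
  assert (Hqcs : 0 < q - c * s) by nra.
  assert (Ha0 : 0 < a) by (unfold a; apply div_pos; nra).
  assert (Ha1 : a < 1) by nra.
  assert (HGa : c < G0 * a) by nra.
  assert (Eaq : a * q = c * (1 - s) + a * c * s) by (rewrite <- Ea; ring).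
  assert (Ka : 1 - (1 - a) * s = a * q / c) by (unfold Rdiv; rewrite Eaq; field; lra).
  assert (Pa : (a - W1) * (a - W2) > 0).
  { pose proof (Hh a) as H1. rewrite Ka in H1.
    assert (q ^ 2 * a - c * G0 * (a * q / c) ^ 2 < 0).
    { replace (q ^ 2 * a - c * G0 * (a * q / c) ^ 2) with (q ^ 2 * a * (c - G0 * a) / c) by (field; lra).
      apply div_neg; [|lra]. assert (0 < q ^ 2 * a) by nra. nra. }
    nra. }
  assert (HaW1 : a < W1) by nra.
  set (b := (q * t - G0 * (t - tau)) / (G0 * tau)).
  assert (Eb : G0 * s * b = q - G0 * (1 - s)) by (unfold b, s, sr; field; lra).
  assert (Hba : b < a).
  { assert (G0 * s * b < c * s) by lra.
    assert (G0 * b < c) by nra. nra. }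
  assert (Hw0 : w0 c G0 t tau q = a) by (unfold w0; fold a b; apply Rmax_left; lra).
  assert (IS : is_RInt (d_s c t tau q) a W1 (Sf c s q W1 - Sf c s q a)) by (apply is_RInt_ds; lra).
  assert (IC : is_RInt (d_c G0 t tau q) W1 1 (Cf G0 s q 1 - Cf G0 s q W1)) by (apply is_RInt_dc; [lra|lra|lra|exact Hs]).
  assert (EAs : A_s c t tau q a W1 = Sf c s q W1 - Sf c s q a) by (apply is_RInt_unique; exact IS).
  assert (EAc : A_c G0 t tau q W1 1 = Cf G0 s q 1 - Cf G0 s q W1) by (apply is_RInt_unique; exact IC).
  repeat split; try assumption; try lra.
  - pose proof (Hh W1) as H1. replace (W1 - W1) with 0 in H1 by ring. lra.
  - unfold coopA, A_s, A_c. apply split3; try lra.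
    + intros w Hw. apply Rmax_right.
      assert (d_s c t tau q w < 0).
      { rewrite ds_form by lra. fold s a. apply div_neg; nra. }
      pose proof (Rmin_l (d_s c t tau q w) (d_c G0 t tau q w)). lra.
    + intros w Hw.
      assert (HK : 0 < Kf t tau w) by (apply Kpos; [exact Hs | lra]).
      assert (d_s c t tau q w > 0) by (rewrite ds_form by lra; fold s a; apply div_pos; nra).
      assert (d_s c t tau q w - d_c G0 t tau q w < 0).
      { rewrite diff_form by lra. fold s. rewrite Hh. apply div_neg; [|repeat apply Rmult_lt_0_compat; lra].
        assert (0 < (w - W1) * (w - W2)) by nra. nra. }
      rewrite Rmin_left by lra. apply Rmax_left; lra.
    + intros w Hw.
      assert (HK : 0 < Kf t tau w) by (apply Kpos; [exact Hs | lra]).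
      assert (d_c G0 t tau q w > 0) by (rewrite dc_form by lra; fold s b; apply div_pos; nra).
      assert (d_s c t tau q w - d_c G0 t tau q w > 0).
      { rewrite diff_form by lra. fold s. rewrite Hh. apply div_pos; [|repeat apply Rmult_lt_0_compat; lra].
        assert ((w - W1) * (w - W2) < 0) by nra. nra. }
      rewrite Rmin_right by lra. apply Rmax_left; lra.
    + exists (Sf c s q W1 - Sf c s q a); exact IS.
    + exists (Cf G0 s q 1 - Cf G0 s q W1); exact IC.
Qed.

Lemma VI_struct (c G0 t tau q : R) : 0 < c -> c < G0 -> 0 < t -> regionVI c G0 t tau q ->
  let s := sr t tau in
  let b := (q * t - G0 * (t - tau)) / (G0 * tau) in
  let W2 := w2 c G0 t tau q in
  w0 c G0 t tau q = b /\ 0 < b /\ b < W2 /\ W2 < 1 /\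
  G0 * (1 - (1 - b) * s) = q /\ q ^ 2 * W2 = c * G0 * (1 - (1 - W2) * s) ^ 2 /\
  0 < Defs.disc c G0 t tau q /\ 0 < tau /\
  A_c G0 t tau q b W2 = Cf G0 s q W2 - Cf G0 s q b /\
  A_s c t tau q W2 1 = Sf c s q 1 - Sf c s q W2 /\
  coopA c G0 t tau q = A_c G0 t tau q b W2 + A_s c t tau q W2 1.
Proof.
  intros Hc HcG Ht [[Htau Hq] [Hdisc [HV1 HV2]]] s b W2.
  pose proof (s_bounds t tau Ht Htau) as Hs. fold s in Hs, HV1, Hdisc.
  set (m := sqrt (c * G0)) in HV2.
  assert (Hm : m * m = c * G0) by (apply sqrt_sqrt; nra).
  assert (Hm0 : 0 < m) by (apply sqrt_lt_R0; nra).
  assert (Hqm : q * q < m * m) by nra.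
  assert (HcG0 : 0 < c * G0) by nra.
  assert (HcGs1 : 0 < c * G0 * s * (1 - s)) by (apply Rmult_lt_0_compat; [apply Rmult_lt_0_compat|]; lra).
  assert (HG1 : 0 < G0 * (1 - s) + c * s) by nra.
  assert (HAM : 4 * c * G0 * s * (1 - s) <= (G0 * (1 - s) + c * s) ^ 2)
    by (pose proof (pow2_ge_0 (G0 * (1 - s) - c * s)); nra).
  set (D := Defs.disc c G0 t tau q).
  assert (HD : D = q ^ 2 - 4 * c * G0 * s * (1 - s)) by reflexivity.
  assert (HDpos : 0 < D) by (rewrite HD; nra).
  set (Rt := sqrt D).
  assert (HR : Rt * Rt = q ^ 2 - 4 * c * G0 * s * (1 - s)) by (unfold Rt; rewrite sqrt_sqrt; lra).
  assert (HR0 : 0 <= Rt) by apply sqrt_pos.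
  assert (HRq : Rt < q) by nra.
  set (W1 := ((q - Rt) / (2 * s * m)) ^ 2).
  assert (EW2 : W2 = ((q + Rt) / (2 * s * m)) ^ 2) by reflexivity.
  assert (Hsm : 0 < 2 * s * m) by nra.
  assert (HW12 : W1 <= W2).
  { rewrite EW2. unfold W1. apply pow_incr. split.
    - apply Rlt_le, div_pos; lra.
    - unfold Rdiv. apply Rmult_le_compat_r; [apply Rlt_le, Rinv_0_lt_compat; lra | lra]. }
  assert (Hh : forall w, q ^ 2 * w - c * G0 * (1 - (1 - w) * s) ^ 2 = - c * G0 * s ^ 2 * (w - W1) * (w - W2)).
  { intro w. rewrite EW2. unfold W1. apply hfact; auto; lra. }
  assert (HcGs : 0 < c * G0 * s ^ 2) by (apply Rmult_lt_0_compat; [nra | nra]).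
  assert (P1 : (1 - W1) * (1 - W2) > 0).
  { pose proof (Hh 1) as H1. replace (1 - (1 - 1) * s) with 1 in H1 by ring.
    assert (- c * G0 * s ^ 2 * (1 - W1) * (1 - W2) < 0) by nra. nra. }
  assert (Eb : G0 * s * b = q - G0 * (1 - s)) by (unfold b, s, sr; field; lra).
  assert (Kb : G0 * (1 - (1 - b) * s) = q).
  { replace (G0 * (1 - (1 - b) * s)) with (G0 * (1 - s) + G0 * s * b) by ring. rewrite Eb. ring. }
  assert (HGb : c < G0 * b) by nra.
  assert (Hb0 : 0 < b) by nra.
  assert (Hb1 : b < 1) by nra.
  assert (Pb : (b - W1) * (b - W2) < 0).
  { pose proof (Hh b) as H1.
    assert (Kb' : 1 - (1 - b) * s = q / G0) by (rewrite <- Kb; field; lra).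
    rewrite Kb' in H1.
    assert (q ^ 2 * b - c * G0 * (q / G0) ^ 2 > 0).
    { replace (q ^ 2 * b - c * G0 * (q / G0) ^ 2) with (q ^ 2 * (G0 * b - c) / G0) by (field; lra).
      apply div_pos; [|lra]. assert (0 < q ^ 2) by nra. nra. }
    nra. }
  assert (HbW : W1 < b < W2).
  { destruct (Rlt_or_le W1 b); destruct (Rlt_or_le b W2); split; nra. }
  assert (HW2 : W2 < 1).
  { assert (0 < 1 - W1) by lra. nra. }
  set (a := c * (t - tau) / (q * t - c * tau)).
  assert (Hqt : 0 < q * t - c * tau) by nra.
  assert (Ea : a * (q - c * s) = c * (1 - s)) by (unfold a, s, sr; field; lra).
  assert (Hqcs : 0 < q - c * s) by nra.
  assert (Hab : a < b).
  { assert (G0 * a * (q - c * s) < c * (q - c * s)) by nra.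
    assert (G0 * a < c) by nra. nra. }
  assert (Hw0 : w0 c G0 t tau q = b) by (unfold w0; fold a b; apply Rmax_right; lra).
  assert (IC : is_RInt (d_c G0 t tau q) b W2 (Cf G0 s q W2 - Cf G0 s q b)) by (apply is_RInt_dc; [lra|lra|lra|exact Hs]).
  assert (IS : is_RInt (d_s c t tau q) W2 1 (Sf c s q 1 - Sf c s q W2)) by (apply is_RInt_ds; lra).
  assert (EAc : A_c G0 t tau q b W2 = Cf G0 s q W2 - Cf G0 s q b) by (apply is_RInt_unique; exact IC).
  assert (EAs : A_s c t tau q W2 1 = Sf c s q 1 - Sf c s q W2) by (apply is_RInt_unique; exact IS).
  repeat split; try assumption; try lra.
  - pose proof (Hh W2) as H1. replace (W2 - W2) with 0 in H1 by ring. lra.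
  - unfold coopA, A_s, A_c. apply split3; try lra.
    + intros w Hw. apply Rmax_right.
      assert (HK : 0 < Kf t tau w) by (apply Kpos; [exact Hs | lra]).
      assert (d_c G0 t tau q w < 0).
      { rewrite dc_form by lra. fold s b. apply div_neg; [nra|]. apply Rmult_lt_0_compat; lra. }
      pose proof (Rmin_r (d_s c t tau q w) (d_c G0 t tau q w)). lra.
    + intros w Hw.
      assert (HK : 0 < Kf t tau w) by (apply Kpos; [exact Hs | lra]).
      assert (d_c G0 t tau q w > 0).
      { rewrite dc_form by lra. fold s b. apply div_pos; [nra|]. apply Rmult_lt_0_compat; lra. }
      assert (d_s c t tau q w - d_c G0 t tau q w > 0).
      { rewrite diff_form by lra. fold s. rewrite Hh. apply div_pos; [|repeat apply Rmult_lt_0_compat; lra].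
        assert ((w - W1) * (w - W2) < 0) by nra. nra. }
      rewrite Rmin_right by lra. apply Rmax_left; lra.
    + intros w Hw.
      assert (HK : 0 < Kf t tau w) by (apply Kpos; [exact Hs | lra]).
      assert (d_s c t tau q w > 0) by (rewrite ds_form by lra; fold s a; apply div_pos; nra).
      assert (d_s c t tau q w - d_c G0 t tau q w < 0).
      { rewrite diff_form by lra. fold s. rewrite Hh. apply div_neg; [|repeat apply Rmult_lt_0_compat; lra].
        assert (0 < (w - W1) * (w - W2)) by nra. nra. }
      rewrite Rmin_left by lra. apply Rmax_left; lra.
    + exists (Cf G0 s q W2 - Cf G0 s q b); exact IC.
    + exists (Sf c s q 1 - Sf c s q W2); exact IS.
Qed.

Lemma derivV (c G s q : R) (xf yf : R -> R) :
  0 < q -> 0 < s < 1 -> 0 < G -> 0 < c -> 0 < xf q -> 0 < yf q ->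
  ex_derive xf q -> ex_derive yf q ->
  xf q * (q - c * s) = c * (1 - s) ->
  q ^ 2 * yf q = c * G * (1 - (1 - yf q) * s) ^ 2 ->
  is_derive (fun r => Sf c s r (yf r) - Sf c s r (xf r) + (Cf G s r 1 - Cf G s r (yf r))) q
    (c / q ^ 2 * ((1 - s) * ln (yf q) + s * yf q) - c / q ^ 2 * ((1 - s) * ln (xf q) + s * xf q)
     + (- / (G * s) * ln (1 - (1 - 1) * s) + / (G * s) * ln (1 - (1 - yf q) * s))).
Proof.
  intros Hq Hs HG Hc Hx Hy Dx Dy Ex Ey.
  assert (HK : 0 < 1 - (1 - yf q) * s) by nra.
  unfold Sf, Cf. auto_derive.
  - repeat split; auto; lra.
  - set (x := xf q) in *. set (y := yf q) in *.
    set (DX := Derive xf q). set (DY := Derive yf q).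
    assert (Cx : 1 - c / q * ((1 - s) / x + s) = 0).
    { replace ((1 - s) / x) with ((q - c * s) / c).
      - field; lra.
      - apply (Rmult_eq_reg_r (x * c)); [| nra]. field_simplify; [|lra|lra]. nra. }
    assert (Cy : (1 - c / q * ((1 - s) / y + s)) - (1 - q / (G * s) * (s / (1 - (1 - y) * s))) = 0).
    { replace ((1 - c / q * ((1 - s) / y + s)) - (1 - q / (G * s) * (s / (1 - (1 - y) * s))))
        with ((q ^ 2 * y - c * G * (1 - (1 - y) * s) ^ 2) / (G * (1 - (1 - y) * s) * q * y)).
      - rewrite Ey. unfold Rdiv. ring.
      - field. repeat split; lra. }
    clearbody x y DX DY. transitivity (c / q ^ 2 * ((1 - s) * ln y + s * y) - c / q ^ 2 * ((1 - s) * ln x + s * x)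
     + (- / (G * s) * ln (1 - (1 - 1) * s) + / (G * s) * ln (1 - (1 - y) * s))
     + DX * (- (1 - c / q * ((1 - s) / x + s)))
     + DY * ((1 - c / q * ((1 - s) / y + s)) - (1 - q / (G * s) * (s / (1 - (1 - y) * s))))).
    + assert (E1 : 1 + - ((1 + - y) * s) = 1 - (1 - y) * s) by ring. rewrite E1. field. repeat split; lra.
    + rewrite Cx, Cy. ring.
Qed.

Lemma derivVI (c G s q : R) (xf yf : R -> R) :
  0 < q -> 0 < s < 1 -> 0 < G -> 0 < c -> 0 < xf q -> 0 < yf q ->
  ex_derive xf q -> ex_derive yf q ->
  G * (1 - (1 - xf q) * s) = q ->
  q ^ 2 * yf q = c * G * (1 - (1 - yf q) * s) ^ 2 ->
  is_derive (fun r => Cf G s r (yf r) - Cf G s r (xf r) + (Sf c s r 1 - Sf c s r (yf r))) q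
    (- / (G * s) * ln (1 - (1 - yf q) * s) + / (G * s) * ln (1 - (1 - xf q) * s)
     + (c / q ^ 2 * ((1 - s) * ln 1 + s * 1) - c / q ^ 2 * ((1 - s) * ln (yf q) + s * yf q))).
Proof.
  intros Hq Hs HG Hc Hx Hy Dx Dy Ex Ey.
  assert (HKy : 0 < 1 - (1 - yf q) * s) by nra.
  assert (HKx : 0 < 1 - (1 - xf q) * s) by nra.
  unfold Sf, Cf. auto_derive.
  - repeat split; auto; lra.
  - set (x := xf q) in *. set (y := yf q) in *.
    set (DX := Derive xf q). set (DY := Derive yf q).
    assert (Cx : 1 - q / (G * s) * (s / (1 - (1 - x) * s)) = 0).
    { replace (1 - (1 - x) * s) with (q / G) by (rewrite <- Ex; field; lra). field. lra. }
    assert (Cy : (1 - q / (G * s) * (s / (1 - (1 - y) * s))) - (1 - c / q * ((1 - s) / y + s)) = 0).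
    { replace ((1 - q / (G * s) * (s / (1 - (1 - y) * s))) - (1 - c / q * ((1 - s) / y + s)))
        with (- (q ^ 2 * y - c * G * (1 - (1 - y) * s) ^ 2) / (G * (1 - (1 - y) * s) * q * y)).
      - rewrite Ey. unfold Rdiv. ring.
      - field. repeat split; lra. }
    clearbody x y DX DY.
    transitivity (- / (G * s) * ln (1 - (1 - y) * s) + / (G * s) * ln (1 - (1 - x) * s)
     + (c / q ^ 2 * ((1 - s) * ln 1 + s * 1) - c / q ^ 2 * ((1 - s) * ln y + s * y))
     + DX * (- (1 - q / (G * s) * (s / (1 - (1 - x) * s))))
     + DY * ((1 - q / (G * s) * (s / (1 - (1 - y) * s))) - (1 - c / q * ((1 - s) / y + s)))).
    + assert (E1 : 1 + - ((1 + - y) * s) = 1 - (1 - y) * s) by ring.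
      assert (E2 : 1 + - ((1 + - x) * s) = 1 - (1 - x) * s) by ring.
      rewrite ?E1, ?E2. field. repeat split; lra.
    + rewrite Cx, Cy. ring.
Qed.

Lemma deriv_zero (f : R -> R) (l x lo hi : R) : is_derive f x l -> lo < x < hi ->
  (forall y, lo < y < hi -> f y <= f x) -> l = 0.
Proof.
  intros H Hx Hmax. apply is_derive_Reals in H.
  pose (pr := exist (fun l0 => derivable_pt_abs f x l0) l H : derivable_pt f x).
  pose proof (deriv_maximum f lo hi x pr (proj1 Hx) (proj2 Hx) (fun y H1 H2 => Hmax y (conj H1 H2))) as E.
  exact E.
Qed.

Theorem proposition3 (c G0 t : R) (hc : 0 < c) (hcG : c < G0) (ht : 0 < t) :
  (forall taus ps : R,
     regionV c G0 t taus ps ->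
     (forall tau p, regionV c G0 t tau p -> coopA c G0 t tau p <= coopA c G0 t taus ps) ->
     A_c G0 t taus ps (w1 c G0 t taus ps) 1 - A_s c t taus ps (w0 c G0 t taus ps) (w1 c G0 t taus ps)
       = 1 - 2 * w1 c G0 t taus ps + w0 c G0 t taus ps)
  /\
  (forall taus ps : R,
     regionVI c G0 t taus ps ->
     (forall tau p, regionVI c G0 t tau p -> coopA c G0 t tau p <= coopA c G0 t taus ps) ->
     A_s c t taus ps (w2 c G0 t taus ps) 1 - A_c G0 t taus ps (w0 c G0 t taus ps) (w2 c G0 t taus ps)
       = 1 - 2 * w2 c G0 t taus ps + w0 c G0 t taus ps).
Proof.
  split.
  - intros taus ps HV Hmax.
    pose proof HV as HV'.
    destruct HV' as [[Htau Hq] [Hdisc [HV1 HV2]]].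
    pose proof (s_bounds t taus ht Htau) as Hs.
    set (s := sr t taus) in *.
    set (af := fun r => c * (t - taus) / (r * t - c * taus)).
    set (w1f := fun r => w1 c G0 t taus r).
    set (Phi := fun r => Sf c s r (w1f r) - Sf c s r (af r) + (Cf G0 s r 1 - Cf G0 s r (w1f r))).
    assert (HPhi : forall r, regionV c G0 t taus r -> coopA c G0 t taus r = Phi r).
    { intros r Hr. pose proof (V_struct c G0 t taus r hc hcG ht Hr) as HS. cbv zeta in HS.
      destruct HS as (_ & _ & _ & _ & _ & _ & _ & _ & E1 & E2 & E3).
      rewrite E3, E1, E2. unfold Phi, af, w1f. fold s. ring. }
    pose proof (V_struct c G0 t taus ps hc hcG ht HV) as HS. cbv zeta in HS.
    destruct HS as (Hw0 & Ha0 & HaW & HW1 & Ea & Ey & HD & Hqt & EAs & EAc & _).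
    fold s in Ea, Ey, EAs, EAc.
    assert (Hm0 : 0 < sqrt (c * G0)) by (apply sqrt_lt_R0; nra).
    assert (Hmc : c < sqrt (c * G0)).
    { apply Rsqr_incrst_0; [| lra | lra]. rewrite Rsqr_sqrt by nra. unfold Rsqr. nra. }
    set (lo := sqrt (c * G0)) in *. set (hi := Rmin G0 (G0 * (1 - s) + c * s)).
    assert (Hint : lo < ps < hi).
    { split; [exact HV2|]. unfold hi. apply Rmin_glb_lt; lra. }
    assert (Hreg : forall y, lo < y < hi -> regionV c G0 t taus y).
    { intros y [Hy1 Hy2]. unfold hi in Hy2.
      pose proof (Rmin_l G0 (G0 * (1 - s) + c * s)). pose proof (Rmin_r G0 (G0 * (1 - s) + c * s)).
      assert (Hyy : c * G0 < y * y).
      { rewrite <- (sqrt_sqrt (c * G0)) by nra. fold lo. nra. }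
      assert (H4 : 4 * s * (1 - s) <= 1) by (pose proof (pow2_ge_0 (2 * s - 1)); nra).
      unfold regionV, inD. fold s. repeat split; try lra.
      { apply Rle_ge. assert (0 < c * G0) by nra. nra. } { fold lo. lra. } }
    assert (Dx : ex_derive af ps).
    { unfold af. auto_derive. lra. }
    assert (Dy : ex_derive w1f ps).
    { unfold w1f, w1, Defs.disc. fold s. auto_derive. unfold Defs.disc in HD. fold s in HD. fold lo.
      repeat split; try lra; try nra. }
    pose proof (derivV c G0 s ps af w1f ltac:(lra) Hs ltac:(lra) hc Ha0 ltac:(unfold w1f; lra) Dx Dy Ea Ey) as Hd.
    fold Phi in Hd.
    assert (Hl := deriv_zero Phi _ ps lo hi Hd Hint).
    assert (Hl0 : forall y, lo < y < hi -> Phi y <= Phi ps).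
    { intros y Hy. rewrite <- !HPhi by auto. apply Hmax. auto. }
    specialize (Hl Hl0).
    rewrite Hw0. unfold w1f, af in *. cbv beta in *. rewrite EAs, EAc.
    set (a := c * (t - taus) / (ps * t - c * taus)) in *.
    set (W1 := w1 c G0 t taus ps) in *.
    replace (1 - (1 - 1) * s) with 1 in Hl by ring. rewrite ln_1 in Hl.
    unfold Sf, Cf. replace (1 - (1 - 1) * s) with 1 by ring. rewrite ln_1.
    apply Rminus_diag_uniq.
    transitivity (ps * (c / ps ^ 2 * ((1 - s) * ln W1 + s * W1) - c / ps ^ 2 * ((1 - s) * ln a + s * a) +
      (- / (G0 * s) * 0 + / (G0 * s) * ln (1 - (1 - W1) * s)))).
    + field. split; lra.
    + rewrite Hl. ring.
  - intros taus ps HV Hmax.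
    pose proof HV as HV'.
    destruct HV' as [[Htau Hq] [Hdisc [HV1 HV2]]].
    pose proof (s_bounds t taus ht Htau) as Hs.
    set (s := sr t taus) in *.
    set (bf := fun r => (r * t - G0 * (t - taus)) / (G0 * taus)).
    set (w2f := fun r => w2 c G0 t taus r).
    set (Phi := fun r => Cf G0 s r (w2f r) - Cf G0 s r (bf r) + (Sf c s r 1 - Sf c s r (w2f r))).
    assert (HPhi : forall r, regionVI c G0 t taus r -> coopA c G0 t taus r = Phi r).
    { intros r Hr. pose proof (VI_struct c G0 t taus r hc hcG ht Hr) as HS. cbv zeta in HS.
      destruct HS as (_ & _ & _ & _ & _ & _ & _ & _ & E1 & E2 & E3).
      rewrite E3, E1, E2. unfold Phi, bf, w2f. fold s. ring. }
    pose proof (VI_struct c G0 t taus ps hc hcG ht HV) as HS. cbv zeta in HS.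
    destruct HS as (Hw0 & Hb0 & HbW & HW2 & Eb & Ey & HD & Htau0 & EAc & EAs & _).
    fold s in Eb, Ey, EAs, EAc.
    assert (Hm0 : 0 < sqrt (c * G0)) by (apply sqrt_lt_R0; nra).
    assert (HmG : sqrt (c * G0) < G0).
    { apply Rsqr_incrst_0; [| lra | lra]. rewrite Rsqr_sqrt by nra. unfold Rsqr. nra. }
    set (hi := sqrt (c * G0)) in *. set (lo := Rmax c (G0 * (1 - s) + c * s)).
    assert (Hint : lo < ps < hi).
    { split; [|exact HV2]. unfold lo. apply Rmax_lub_lt; lra. }
    assert (Hreg : forall y, lo < y < hi -> regionVI c G0 t taus y).
    { intros y [Hy1 Hy2]. unfold lo in Hy1.
      pose proof (Rmax_l c (G0 * (1 - s) + c * s)). pose proof (Rmax_r c (G0 * (1 - s) + c * s)).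
      assert (HG1 : 0 < G0 * (1 - s) + c * s) by nra.
      assert (HAM : 4 * c * G0 * s * (1 - s) <= (G0 * (1 - s) + c * s) ^ 2)
        by (pose proof (pow2_ge_0 (G0 * (1 - s) - c * s)); nra).
      unfold regionVI, inD. fold s. repeat split; try lra.
      { apply Rle_ge. nra. } { fold hi. lra. } }
    assert (Dx : ex_derive bf ps).
    { unfold bf. auto_derive. nra. }
    assert (Dy : ex_derive w2f ps).
    { unfold w2f, w2, Defs.disc. fold s. auto_derive. unfold Defs.disc in HD. fold s in HD. fold hi.
      repeat split; try lra; try nra. }
    pose proof (derivVI c G0 s ps bf w2f ltac:(lra) Hs ltac:(lra) hc Hb0 ltac:(unfold w2f; lra) Dx Dy Eb Ey) as Hd.
    fold Phi in Hd.
    assert (Hl := deriv_zero Phi _ ps lo hi Hd Hint).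
    assert (Hl0 : forall y, lo < y < hi -> Phi y <= Phi ps).
    { intros y Hy. rewrite <- !HPhi by auto. apply Hmax. auto. }
    specialize (Hl Hl0).
    rewrite Hw0. unfold w2f, bf in *. cbv beta in *. rewrite EAs, EAc.
    set (b := (ps * t - G0 * (t - taus)) / (G0 * taus)) in *.
    set (W2 := w2 c G0 t taus ps) in *.
    rewrite ln_1 in Hl.
    unfold Sf, Cf. rewrite ln_1.
    apply Rminus_diag_uniq.
    transitivity (- ps * (- / (G0 * s) * ln (1 - (1 - W2) * s) + / (G0 * s) * ln (1 - (1 - b) * s)
     + (c / ps ^ 2 * ((1 - s) * 0 + s * 1) - c / ps ^ 2 * ((1 - s) * ln W2 + s * W2)))).
    + field. split; lra.
    + rewrite Hl. ring.
Qed.
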